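(* Let $n\in\mathbb{N}$ and let $K\subset\mathbb{R}^n$ be a strictly convex, $0$-symmetric convex body. Then \[ G(K)\le 2^n\bigl(G(\operatorname{int}K)+1\bigr)-1. \]
   Context: A convex body in $\mathbb{R}^n$ is a compact convex set with nonempty interior; it is $0$-symmetric if $K=-K$, and strictly convex if its boundary contains no nondegenerate line segment. For $S\subset\mathbb{R}^n$, $G(S)=|S\cap\mathbb{Z}^n|$, and $\operatorname{int}K$ denotes the interior of $K$. *)

(* Defs.v *)
From mathcomp Require Import ssreflect ssrfun ssrbool eqtype ssrnat seq fintype bigop.
From Stdlib Require Import Reals ZArith List.

Set Implicit Arguments.
Unset Strict Implicit.

Definition vec (n : nat) := 'I_n -> R.

Definition vadd n (x y : vec n) : vec n := fun i => (x i + y i)%R.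
Definition vscale n (t : R) (x : vec n) : vec n := fun i => (t * x i)%R.
Definition vopp n (x : vec n) : vec n := fun i => (- x i)%R.

Definition dist2 n (x y : vec n) : R :=
  \big[Rplus/0%R]_(i < n) ((x i - y i) * (x i - y i))%R.

Definition in_ball n (x : vec n) (eps : R) (y : vec n) : Prop :=
  (dist2 x y < eps * eps)%R.

Definition int_pts n (K : vec n -> Prop) (x : vec n) : Prop :=
  exists eps : R, (0 < eps)%R /\ forall y, in_ball x eps y -> K y.

Definition cl_pts n (K : vec n -> Prop) (x : vec n) : Prop :=
  forall eps : R, (0 < eps)%R -> exists y, K y /\ in_ball x eps y.

Definition boundary n (K : vec n -> Prop) (x : vec n) : Prop :=
  cl_pts K x /\ ~ int_pts K x.

Definition is_closed n (K : vec n -> Prop) : Prop :=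
  forall x, cl_pts K x -> K x.

Definition is_bounded n (K : vec n -> Prop) : Prop :=
  exists M : R, forall x, K x -> (dist2 x (fun _ => 0%R) <= M)%R.

Definition is_convex n (K : vec n -> Prop) : Prop :=
  forall x y (t : R), K x -> K y -> (0 <= t <= 1)%R ->
    K (vadd (vscale t x) (vscale (1 - t) y)).

Definition convex_body n (K : vec n -> Prop) : Prop :=
  is_convex K /\ is_closed K /\ is_bounded K /\ exists x, int_pts K x.

Definition o_symmetric n (K : vec n -> Prop) : Prop :=
  forall x, K x <-> K (vopp x).

Definition strictly_convex n (K : vec n -> Prop) : Prop :=
  forall x y : vec n, x <> y ->
    ~ (forall t : R, (0 <= t <= 1)%R ->
         boundary K (vadd (vscale t x) (vscale (1 - t) y))).

Definition zvec (n : nat) := 'I_n -> Z.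
Definition zembed n (z : zvec n) : vec n := fun i => IZR (z i).

(* G(S) = m : the set S ∩ Z^n is finite with exactly m elements *)
Definition lattice_count n (S : vec n -> Prop) (m : nat) : Prop :=
  exists l : list (zvec n), NoDup l /\ length l = m /\
    forall z : zvec n, In z l <-> S (zembed z).

(* Main.v *)
Require Import Defs.
From HB Require Import structures.
From mathcomp Require Import ssreflect ssrfun ssrbool eqtype ssrnat seq fintype bigop.
From Stdlib Require Import Reals ZArith List Lra Lia ClassicalEpsilon FunctionalExtensionality Classical.

HB.instance Definition _ := Monoid.isComLaw.Build R 0%R Rplus (fun x y z => esym (Rplus_assoc x y z)) Rplus_comm Rplus_0_l.

Set Implicit Arguments.
Local Open Scope R_scope.

Lemma sum_scale n c (F : 'I_n -> R) :
  \big[Rplus/0]_(i < n) (c * F i) = c * \big[Rplus/0]_(i < n) F i.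
Proof.
elim: n F => [|n IH] F; first by rewrite !big_ord0 Rmult_0_r.
rewrite !big_ord_recr /= IH Rmult_plus_distr_l; reflexivity.
Qed.

Lemma sum_ge0 n (F : 'I_n -> R) : (forall i, 0 <= F i) -> 0 <= \big[Rplus/0]_(i < n) F i.
Proof. move=> H; apply: (big_ind (fun x => 0 <= x)) => //; [lra| move=> x y; lra]. Qed.

Lemma term_le_sum n (F : 'I_n -> R) j : (forall i, 0 <= F i) -> F j <= \big[Rplus/0]_(i < n) F i.
Proof.
move=> H; rewrite (bigD1 j) //=.
rewrite -{1}(Rplus_0_r (F j)); apply: Rplus_le_compat_l.
apply: (big_ind (fun x => 0 <= x)) => //; [lra| move=> x y; lra].
Qed.

Lemma dist2_refl n (x : vec n) : dist2 x x = 0.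
Proof.
rewrite /dist2 (eq_bigr (fun i => 0 * 1)); last by move=> i _; ring.
rewrite sum_scale; ring.
Qed.

Lemma K_cl n (K : vec n -> Prop) x : K x -> cl_pts K x.
Proof. move=> Kx eps He; exists x; split => //; rewrite /in_ball dist2_refl; nra. Qed.

Lemma int_K n (K : vec n -> Prop) x : int_pts K x -> K x.
Proof. case=> eps [He H]; apply: H; rewrite /in_ball dist2_refl; nra. Qed.

Lemma int_mix n (K : vec n -> Prop) q a s : is_convex K -> int_pts K q -> K a -> 0 < s <= 1 ->
  int_pts K (vadd (vscale s q) (vscale (1 - s) a)).
Proof.
move=> Kc [eps [He Hq]] Ka Hs.
exists (s * eps); split; first nra.
move=> y Hy.
pose y' : vec n := fun i => (y i - (1 - s) * a i) / s.
have Hd : dist2 q y' = / (s * s) * dist2 (vadd (vscale s q) (vscale (1 - s) a)) y.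
  rewrite /dist2 -sum_scale; apply: eq_bigr => i _.
  rewrite /y' /vadd /vscale; field; lra.
have Ky' : K y'.
  apply: Hq; rewrite /in_ball Hd.
  move: Hy; rewrite /in_ball => Hy.
  have Hss : 0 < s * s by nra.
  apply (Rmult_lt_reg_l (s * s)); first by [].
  rewrite -Rmult_assoc Rinv_r; last lra.
  nra.
have -> : y = vadd (vscale s y') (vscale (1 - s) a).
  apply: functional_extensionality => i; rewrite /vadd /vscale /y'; field; lra.
apply: Kc => //; lra.
Qed.

Lemma midpoint_int n (K : vec n -> Prop) a b : is_convex K -> strictly_convex K -> K a -> K b -> a <> b ->
  int_pts K (vadd (vscale (1/2) a) (vscale (1/2) b)).
Proof.
move=> Kc Ks Ka Kb Hab.
have [t [Ht Hnb]] : exists t, 0 <= t <= 1 /\ ~ boundary K (vadd (vscale t a) (vscale (1 - t) b)).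
  apply: NNPP => H; apply: (Ks a b Hab) => t Ht.
  apply: NNPP => Hn; apply: H; exists t; split => //.
have Hint : int_pts K (vadd (vscale t a) (vscale (1 - t) b)).
  apply: NNPP => Hn; apply: Hnb; split => //; apply: K_cl; apply: Kc => //.
case: (Rle_lt_dec (1/2) t) => Ht2.
- have -> : vadd (vscale (1/2) a) (vscale (1/2) b) =
     vadd (vscale (1 / (2 * t)) (vadd (vscale t a) (vscale (1 - t) b))) (vscale (1 - 1/(2*t)) b).
    apply: functional_extensionality => i; rewrite /vadd /vscale; field; lra.
  apply: int_mix => //.
  split; [apply: Rdiv_lt_0_compat; lra|].
  apply (Rmult_le_reg_l (2 * t)); first lra.
  field_simplify; lra.
- have -> : vadd (vscale (1/2) a) (vscale (1/2) b) =
     vadd (vscale (1 / (2 * (1 - t))) (vadd (vscale t a) (vscale (1 - t) b))) (vscale (1 - 1/(2*(1-t))) a).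
    apply: functional_extensionality => i; rewrite /vadd /vscale; field; lra.
  apply: int_mix => //.
  split; [apply: Rdiv_lt_0_compat; lra|].
  apply (Rmult_le_reg_l (2 * (1 - t))); first lra.
  field_simplify; lra.
Qed.

Lemma zero_int n (K : vec n -> Prop) : convex_body K -> o_symmetric K -> int_pts K (fun _ => 0).
Proof.
move=> [Kc [_ [_ [p Hp]]]] Ksym.
have Kp := int_K Hp.
have Kmp : K (vopp p) by apply (proj1 (Ksym p)).
have := @int_mix n K p (vopp p) (1/2) Kc Hp Kmp.
have -> : vadd (vscale (1/2) p) (vscale (1 - 1/2) (vopp p)) = (fun _ => 0).
  apply: functional_extensionality => i; rewrite /vadd /vscale /vopp; field.
apply; lra.
Qed.

Definition dec (P : Prop) : {P} + {~ P} := excluded_middle_informative P.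

Fixpoint allnat (vals : list Z) (n : nat) : list (nat -> Z) :=
  match n with
  | O => (fun _ => 0%Z) :: nil
  | S m => flat_map (fun a => List.map (fun f => fun k => if Nat.eqb k m then a else f k) (allnat vals m)) vals
  end.

Lemma allnat_len vals n : length (allnat vals n) = Nat.pow (length vals) n.
Proof.
elim: n => [|m IH] //=.
have : forall vs, length (flat_map (fun a => List.map (fun f => fun k => if Nat.eqb k m then a else f k) (allnat vals m)) vs) = Nat.mul (length vs) (Nat.pow (length vals) m).
  elim => [|a vs IHv] //=. rewrite length_app length_map IHv IH. lia.
move=> ->; done.
Qed.

Lemma allnat_in vals n h : (forall k, (k < n)%coq_nat -> In (h k) vals) ->
  (forall k, (n <= k)%coq_nat -> h k = 0%Z) -> In h (allnat vals n).
Proof.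
elim: n h => [|m IH] h H1 H2 /=.
  left; apply: functional_extensionality => k; rewrite H2 //; lia.
apply/in_flat_map; exists (h m); split; first (apply: H1; lia).
apply/in_map_iff.
exists (fun k => if Nat.eqb k m then 0%Z else h k); split.
  apply: functional_extensionality => k; case: (Nat.eqb_spec k m) => [->|] //.
apply: IH => k Hk; case: (Nat.eqb_spec k m) => E //.
- lia.
- apply: H1; lia.
- apply: H2; lia.
Qed.

Definition allz n (vals : list Z) : list (zvec n) :=
  List.map (fun h (i : 'I_n) => h (nat_of_ord i)) (allnat vals n).

Lemma allz_len n vals : length (allz n vals) = Nat.pow (length vals) n.
Proof. by rewrite /allz length_map allnat_len. Qed.

Lemma allz_in n vals (z : zvec n) : (forall i, In (z i) vals) -> In z (allz n vals).
Proof.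
move=> H.
pose h (k : nat) : Z := match (insub k : option 'I_n) with Some i => z i | None => 0%Z end.
apply/in_map_iff; exists h; split.
  apply: functional_extensionality => i; by rewrite /h valK.
apply: allnat_in => k Hk; rewrite /h; case: insubP => [i _ Hv|Hn] //.
  by move/ltP: Hk => Hk; rewrite Hk in Hn.
move: (ltn_ord i); rewrite Hv => /ltP; lia.
Qed.

Lemma count_cover n (S : vec n -> Prop) (B : list (zvec n)) :
  (forall z, S (zembed z) -> In z B) ->
  exists l, NoDup l /\ forall z, In z l <-> S (zembed z).
Proof.
move=> HB.
exists (nodup (fun x y => dec (x = y)) (List.filter (fun z => if dec (S (zembed z)) then true else false) B)).
split; first exact: NoDup_nodup.
move=> z; rewrite nodup_In filter_In; split.
  by case=> _; case: dec.
move=> Hz; split; first exact: HB.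
by case: dec.
Qed.

Lemma NoDup_map_on A B (f : A -> B) l : NoDup l ->
  (forall x y, In x l -> In y l -> f x = f y -> x = y) -> NoDup (List.map f l).
Proof.
elim: l => [|a l IH] Hn Hi /=; first constructor.
inversion Hn; subst; constructor.
  move/in_map_iff => [y [Hy Hyl]].
  have E : y = a by apply: Hi; [right|left|] => //.
  by subst.
apply: IH => // x y Hx Hy; apply: Hi; by right.
Qed.

Definition par n (z : zvec n) : zvec n := fun i => (z i mod 2)%Z.
Definition zopp n (z : zvec n) : zvec n := fun i => (- z i)%Z.

Lemma par_even n (a b : zvec n) i : par a = par b -> (a i - b i = 2 * ((a i - b i) / 2))%Z.
Proof.
move=> E; apply/Z.div_exact => //.
have := f_equal (fun g => g i) E; rewrite /par /= => E'.
by rewrite Zminus_mod E' Z.sub_diag.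
Qed.

Lemma box_bound n (K : vec n -> Prop) M z i : (forall x, K x -> (dist2 x (fun _ => 0%R) <= M)%R) ->
  K (zembed z) -> (- up M <= z i <= up M)%Z.
Proof.
move=> HM Kz.
have H1 := HM _ Kz.
have H2 : ((IZR (z i) - 0) * (IZR (z i) - 0) <= dist2 (zembed z) (fun _ => 0%R))%R.
  apply: (term_le_sum (fun j => (zembed z j - 0) * (zembed z j - 0))%R) => j; nra.
have [H3 _] := archimed M.
have H4 : (IZR (z i) < IZR (up M) + 1)%R by nra.
have H5 : (- IZR (up M) - 1 < IZR (z i))%R by nra.
rewrite -plus_IZR in H4. rewrite -opp_IZR -minus_IZR in H5.
apply lt_IZR in H4; apply lt_IZR in H5. lia.
Qed.

Unset Implicit Arguments.
Theorem mainTheorem4 (n : nat) (K : vec n -> Prop) :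
  convex_body K -> o_symmetric K -> strictly_convex K ->
  exists gK gint : nat,
    lattice_count K gK /\ lattice_count (int_pts K) gint /\
    (gK <= 2 ^ n * (gint + 1) - 1)%nat.
Proof.
move=> Kb Ksym Kst.
have Kb' := Kb; case: Kb' => [Kc [_ [[M HM] _]]].
have H0 := zero_int Kb Ksym.
pose N := up M.
pose vals := List.map (fun k => (Z.of_nat k - N)%Z) (List.seq 0 (Z.to_nat (2 * N + 1))).
have Hbox : forall z, K (zembed z) -> In z (allz n vals).
  move=> z Kz; apply: allz_in => i.
  have := @box_bound n K M z i HM Kz; rewrite -/N => Hb.
  apply/in_map_iff; exists (Z.to_nat (z i + N)); split; first lia.
  apply/in_seq; lia.
have [lK [ndK HK]] := @count_cover n K _ Hbox.
have [lI [ndI HI]] := @count_cover n (int_pts K) _ (fun z Hz => Hbox z (int_K Hz)).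
exists (length lK), (length lI).
split; first by exists lK.
split; first by exists lI.
pose pz : zvec n := fun _ => 0%Z.
have zpz : zembed pz = (fun _ => 0%R) by [].
pose cp (p : zvec n) : zvec n :=
  if dec (p = pz) then pz else
  match dec (exists y, K (zembed y) /\ par y = p) with
  | left H => proj1_sig (constructive_indefinite_description _ H)
  | right _ => pz end.
have cpz : cp pz = pz by rewrite /cp; case: dec.
have Hcp : forall x, K (zembed x) -> K (zembed (cp (par x))) /\ par (cp (par x)) = par x.
  move=> x Kx; rewrite /cp; case: dec => [E|NE] /=.
    rewrite zpz; split; first exact: int_K H0.
    rewrite E; apply: functional_extensionality => i; exact: Zmod_0_l.
  case: dec => [H|H].
    by case: (constructive_indefinite_description _ H) => y [Ky Hy].
  by exfalso; apply: H; exists x.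
pose f (x : zvec n) : zvec n * option (zvec n) :=
  (par x, if dec (x = zopp (cp (par x)) /\ x <> cp (par x)) then None
          else Some (fun i => ((x i - cp (par x) i) / 2)%Z)).
pose Pl := allz n (0%Z :: 1%Z :: nil).
have HPl : forall x, In (par x) Pl.
  move=> x; apply: allz_in => i; rewrite /par.
  have := Z.mod_pos_bound (x i) 2; move=> /(_ ltac:(lia)) Hb.
  have : (x i mod 2 = 0 \/ x i mod 2 = 1)%Z by lia.
  case=> ->; [left|right;left] => //.
pose Q := list_prod Pl (None :: List.map Some lI).
pose decp := fun a b : zvec n * option (zvec n) => dec (a = b).
have Hinc : incl (List.map f lK) (remove decp (pz, None) Q).
  move=> y /in_map_iff [x [<- Hx]].
  have Kx : K (zembed x) by apply/HK.
  have [Kc' Hpc] := Hcp x Kx.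
  apply: in_in_remove.
    rewrite /f => E; injection E => E4 E1; move: E4.
    case: dec => // [[E2 E3]] _.
    apply: E3; rewrite E1 cpz; rewrite E1 cpz in E2; rewrite E2.
    apply: functional_extensionality => i /=.
    by rewrite /zopp /pz.
  apply: in_prod; first exact: HPl.
  rewrite /f; case: dec => Hd; first by left.
  right; apply/in_map_iff; eexists; split; first reflexivity.
  apply/HI.
  set c := cp (par x) in Kc' Hpc Hd *.
  case: (dec (x = c)) => Exc.
    have -> : zembed (fun i => ((x i - c i) / 2)%Z) = (fun _ => 0%R).
      apply: functional_extensionality => i; rewrite /zembed Exc Z.sub_diag Zdiv_0_l //.
    exact: H0.
  have Kmc : K (vopp (zembed c)) by apply (proj1 (Ksym _)).
  have Hne : zembed x <> vopp (zembed c).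
    move=> E; apply: Hd; split => //.
    apply: functional_extensionality => i.
    have := f_equal (fun g => g i) E; rewrite /zembed /vopp /zopp -opp_IZR; exact: eq_IZR.
  have -> : zembed (fun i => ((x i - c i) / 2)%Z) =
      vadd (vscale (1/2) (zembed x)) (vscale (1/2) (vopp (zembed c))).
    apply: functional_extensionality => i.
    have Ev := par_even i (esym Hpc).
    have [w0 [Hw0 Hx0]] : exists w0, ((x i - c i) / 2 = w0)%Z /\ x i = (2 * w0 + c i)%Z.
      eexists; split; first reflexivity. lia.
    rewrite /zembed /vadd /vscale /vopp Hw0 Hx0 plus_IZR mult_IZR; lra.
  exact: midpoint_int.
have Hnd : NoDup (List.map f lK).
  apply: NoDup_map_on => // x y Hx Hy.
  have Kx : K (zembed x) by apply/HK.
  have Ky : K (zembed y) by apply/HK.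
  rewrite /f => E; injection E => E2 E1; move: E2; rewrite -E1.
  have [_ Hpx] := Hcp x Kx.
  have [_ Hpy] := Hcp y Ky.
  rewrite -E1 in Hpy.
  set c := cp (par x) in Hpx Hpy *.
  destruct (dec (x = zopp c /\ x <> c)) as [[Ex Ex2]|Nx]; destruct (dec (y = zopp c /\ y <> c)) as [[Ey Ey2]|Ny] => //=.
    by rewrite Ex Ey.
  case=> Ew; apply: functional_extensionality => i.
  have := f_equal (fun g => g i) Ew => /= Ewi.
  move: (par_even i (esym Hpx)) (par_even i (esym (etrans Hpx E1))) => Ea Eb.
  lia.
have L1 := NoDup_incl_length Hnd Hinc.
have L2 : (length (remove decp (pz, None) Q) < length Q)%coq_nat.
  apply: remove_length_lt; apply: in_prod; [apply: (HPl pz)|left] => //.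
  (* pz = par pz *)
have L3 : length Q = Nat.mul (Nat.pow 2 n) (S (length lI)).
  by rewrite /Q length_prod /Pl allz_len /= length_map.
rewrite length_map in L1.
apply/leP.
change (le (length lK) (Nat.sub (Nat.mul (Nat.pow 2 n) (Nat.add (length lI) 1)) 1)).
lia.
Qed.
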